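(* Let $(C\otimes V,\delta_{C\otimes V})$ be a weak crossed coproduct with precounit $\upsilon$ and associated morphisms $\chi_V^C,\tau_V^C$, let $D$ be a coalgebra, and let $p_C:D\rightarrow C$ be a coalgebra morphism and $p_V:D\rightarrow V$ a morphism. The following are equivalent. (i) There exists a unique coalgebra morphism $\varpi:D\rightarrow C\Box V$ such that $\gamma_\upsilon\circ i_{C\otimes V}\circ\varpi=p_C$ and $(\varepsilon_C\otimes V)\circ i_{C\otimes V}\circ\varpi=p_V$. (ii) $\upsilon\circ(p_C\otimes p_V)\circ\delta_D=\varepsilon_D$, $\chi_V^C\circ(p_C\otimes p_V)\circ\delta_D=(p_V\otimes p_C)\circ\delta_D$ and $\tau_V^C\circ(p_C\otimes p_V)\circ\delta_D=(p_V\otimes p_V)\circ\delta_D$.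
   Context: $\mathcal C$ is a strict monoidal category with tensor product $\otimes$ and unit object $K$ in which every idempotent splits (every idempotent $\Gamma$ factors as $i\circ p$ with $p\circ i$ the identity of its image). We write $C\otimes f$ for $id_C\otimes f$. A coalgebra $C$ has counit $\varepsilon_C$ and coproduct $\delta_C$. Weak crossed coproducts. Let $C$ be a coalgebra and $V$ an object, and let $\chi_V^C:C\otimes V\rightarrow V\otimes C$ satisfy $(\chi_V^C\otimes C)\circ(C\otimes\chi_V^C)\circ(\delta_C\otimes V)=(V\otimes\delta_C)\circ\chi_V^C$. Then $\Gamma_{C\otimes V}=(C\otimes V\otimes\varepsilon_C)\circ(C\otimes\chi_V^C)\circ(\delta_C\otimes V)$ is idempotent; $C\Box V$ denotes its image with injection $i_{C\otimes V}$ and projection $p_{C\otimes V}$. Let $\tau_V^C:C\otimes V\rightarrow V\otimes V$ with $\tau_V^C\circ\Gamma_{C\otimes V}=\tau_V^C$. The twisted condition is $(\tau_V^C\otimes C)\circ(C\otimes\chi_V^C)\circ(\delta_C\otimes V)=(V\otimes\chi_V^C)\circ(\chi_V^C\otimes V)\circ(C\otimes\tau_V^C)\circ(\delta_C\otimes V)$ and the cocycle condition is $(\tau_V^C\otimes V)\circ(C\otimes\tau_V^C)\circ(\delta_C\otimes V)=(V\otimes\tau_V^C)\circ(\chi_V^C\otimes V)\circ(C\otimes\tau_V^C)\circ(\delta_C\otimes V)$. Put $\delta_{C\otimes V}=(C\otimes\chi_V^C\otimes V)\circ(\delta_C\otimes\tau_V^C)\circ(\delta_C\otimes V)$. If the twisted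 and cocycle conditions hold, $(C\otimes V,\delta_{C\otimes V})$ is a weak crossed coproduct. For $\upsilon:C\otimes V\rightarrow K$ put $\gamma_\upsilon=(C\otimes\upsilon)\circ(\delta_C\otimes V)$. A weak crossed coproduct with precounit $\upsilon$ is one with $(V\otimes\upsilon)\circ(\chi_V^C\otimes V)\circ(C\otimes\tau_V^C)\circ(\delta_C\otimes V)=(\varepsilon_C\otimes V)\circ\Gamma_{C\otimes V}$, $(\upsilon\otimes V)\circ(C\otimes\tau_V^C)\circ(\delta_C\otimes V)=(\varepsilon_C\otimes V)\circ\Gamma_{C\otimes V}$ and $(\upsilon\otimes C)\circ(C\otimes\chi_V^C)\circ(\delta_C\otimes V)=\gamma_\upsilon$. Then $C\Box V$ is a coalgebra with coproduct $(p_{C\otimes V}\otimes p_{C\otimes V})\circ\delta_{C\otimes V}\circ i_{C\otimes V}$ and counit $\upsilon\circ i_{C\otimes V}$. *)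

(* Defs.v *)
(* Strict monoidal categories are presented in "one-sorted" form: a single
   type of morphisms with domain/codomain maps.  This avoids transports along
   the (propositional) strictness equalities A⊗(B⊗C) = (A⊗B)⊗C, A⊗K = A. *)

Set Implicit Arguments.

Record StrictMonoidalCat := {
  ob : Type;
  mor : Type;
  dom : mor -> ob;
  cod : mor -> ob;
  idm : ob -> mor;
  comp : mor -> mor -> mor;            (* comp g f = g ∘ f *)
  tens : ob -> ob -> ob;
  tensm : mor -> mor -> mor;
  unit : ob;
  dom_id : forall A, dom (idm A) = A;
  cod_id : forall A, cod (idm A) = A;
  dom_comp : forall g f, cod f = dom g -> dom (comp g f) = dom f;
  cod_comp : forall g f, cod f = dom g -> cod (comp g f) = cod g;
  comp_assoc : forall h g f, cod f = dom g -> cod g = dom h ->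
      comp h (comp g f) = comp (comp h g) f;
  comp_id_l : forall f, comp (idm (cod f)) f = f;
  comp_id_r : forall f, comp f (idm (dom f)) = f;
  dom_tensm : forall f g, dom (tensm f g) = tens (dom f) (dom g);
  cod_tensm : forall f g, cod (tensm f g) = tens (cod f) (cod g);
  tensm_id : forall A B, tensm (idm A) (idm B) = idm (tens A B);
  tensm_comp : forall g f g' f', cod f = dom g -> cod f' = dom g' ->
      tensm (comp g f) (comp g' f') = comp (tensm g g') (tensm f f');
  tens_assoc : forall A B C, tens A (tens B C) = tens (tens A B) C;
  tensm_assoc : forall f g h, tensm f (tensm g h) = tensm (tensm f g) h;
  tens_unit_l : forall A, tens unit A = A;
  tens_unit_r : forall A, tens A unit = A;
  tensm_unit_l : forall f, tensm (idm unit) f = f;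
  tensm_unit_r : forall f, tensm f (idm unit) = f
}.

Arguments idm {s}.
Arguments comp {s}.
Arguments tens {s}.
Arguments tensm {s}.
Arguments dom {s}.
Arguments cod {s}.
Arguments unit {s}.

Notation "g ° f" := (comp g f) (at level 40, left associativity).
Notation "f ⊗ g" := (tensm f g) (at level 35, right associativity).
Notation "A ⊗o B" := (tens A B) (at level 35, right associativity).

Section Defs.
Context {M : StrictMonoidalCat}.

Definition hom (f : mor M) (A B : ob M) : Prop := dom f = A /\ cod f = B.

Definition idempotent (e : mor M) (A : ob M) : Prop := hom e A A /\ e ° e = e.

Definition splits_as (e : mor M) (A X : ob M) (i p : mor M) : Prop :=
  hom i X A /\ hom p A X /\ i ° p = e /\ p ° i = idm X.

Definition is_coalgebra (C : ob M) (d e : mor M) : Prop :=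
  hom d C (C ⊗o C) /\ hom e C unit /\
  (d ⊗ idm C) ° d = (idm C ⊗ d) ° d /\
  (e ⊗ idm C) ° d = idm C /\ (idm C ⊗ e) ° d = idm C.

Definition is_coalgebra_morphism (D C : ob M) (dD eD dC eC f : mor M) : Prop :=
  hom f D C /\ (f ⊗ f) ° dD = dC ° f /\ eC ° f = eD.

Section WCC.
Variables (C V : ob M) (dC eC chi tau : mor M).

Definition Gamma : mor M := (idm C ⊗ idm V ⊗ eC) ° (idm C ⊗ chi) ° (dC ⊗ idm V).

Definition delta_CV : mor M :=
  (idm C ⊗ chi ⊗ idm V) ° (dC ⊗ tau) ° (dC ⊗ idm V).

Definition gamma_ups (ups : mor M) : mor M := (idm C ⊗ ups) ° (dC ⊗ idm V).

Definition chi_condition : Prop :=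
  (chi ⊗ idm C) ° (idm C ⊗ chi) ° (dC ⊗ idm V) = (idm V ⊗ dC) ° chi.

Definition twisted_condition : Prop :=
  (tau ⊗ idm C) ° (idm C ⊗ chi) ° (dC ⊗ idm V)
  = (idm V ⊗ chi) ° (chi ⊗ idm V) ° (idm C ⊗ tau) ° (dC ⊗ idm V).

Definition cocycle_condition : Prop :=
  (tau ⊗ idm V) ° (idm C ⊗ tau) ° (dC ⊗ idm V)
  = (idm V ⊗ tau) ° (chi ⊗ idm V) ° (idm C ⊗ tau) ° (dC ⊗ idm V).

Definition weak_crossed_coproduct : Prop :=
  is_coalgebra C dC eC /\
  hom chi (C ⊗o V) (V ⊗o C) /\ hom tau (C ⊗o V) (V ⊗o V) /\
  chi_condition /\ tau ° Gamma = tau /\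
  twisted_condition /\ cocycle_condition.

Definition precounit (ups : mor M) : Prop :=
  hom ups (C ⊗o V) unit /\
  (idm V ⊗ ups) ° (chi ⊗ idm V) ° (idm C ⊗ tau) ° (dC ⊗ idm V)
    = (eC ⊗ idm V) ° Gamma /\
  (ups ⊗ idm V) ° (idm C ⊗ tau) ° (dC ⊗ idm V) = (eC ⊗ idm V) ° Gamma /\
  (ups ⊗ idm C) ° (idm C ⊗ chi) ° (dC ⊗ idm V) = gamma_ups ups.

End WCC.
End Defs.

Definition idempotents_split (M0 : StrictMonoidalCat) : Prop :=
  forall (e : mor M0) (A : ob M0), @idempotent M0 e A -> exists X i p, @splits_as M0 e A X i p.

(* Main.v *)
Require Import Defs.
Set Implicit Arguments.

Section Infra.
Context {M : StrictMonoidalCat}.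
Implicit Types (f g h k : mor M) (A B : ob M).

Lemma hom_id A : hom (idm A) A A.
Proof. split; [apply dom_id | apply cod_id]. Qed.

Lemma hom_comp f g A B B' C0 : hom f A B -> hom g B' C0 -> B = B' -> hom (g ° f) A C0.
Proof. intros [H1 H2] [H3 H4] E; subst. split.
 rewrite dom_comp; congruence. rewrite cod_comp; congruence. Qed.

Lemma hom_tens f g A B A' B' : hom f A B -> hom g A' B' -> hom (f ⊗ g) (A ⊗o A') (B ⊗o B').
Proof. intros [H1 H2] [H3 H4]; split; [rewrite dom_tensm|rewrite cod_tensm]; congruence. Qed.

Lemma hom_conv f A B A' B' : hom f A B -> A = A' -> B = B' -> hom f A' B'.
Proof. intros H E1 E2; subst; auto. Qed.

Lemma cd f g A B B' C0 : hom f A B -> hom g B' C0 -> B = B' -> cod f = dom g.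
Proof. intros [H1 H2] [H3 H4] E; congruence. Qed.
End Infra.

Ltac onorm := repeat (first [rewrite tens_unit_l | rewrite tens_unit_r | rewrite <- tens_assoc]); reflexivity.

Ltac homt := match goal with
| |- hom (comp _ _) _ _ => eapply hom_comp; [homt | homt | onorm]
| |- hom (tensm _ _) _ _ => eapply hom_tens; [homt | homt]
| |- hom (idm _) _ _ => apply hom_id
| _ => eassumption
end.
Ltac homtop := eapply hom_conv; [homt | onorm | onorm].
Ltac ctd := eapply cd; [homt | homt | onorm].
Ltac side := first [ctd | homtop | onorm | assumption].
Set Implicit Arguments.

Section Lib.
Context {M : StrictMonoidalCat}.
Implicit Types (f g h k q a b c d e r : mor M) (A B : ob M).

Lemma asc h g f : cod f = dom g -> cod g = dom h -> h ° (g ° f) = h ° g ° f.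
Proof. intros; apply comp_assoc; auto. Qed.

Lemma idl f A B : hom f A B -> idm B ° f = f.
Proof. intros [H1 H2]; subst; apply comp_id_l. Qed.
Lemma idr f A B : hom f A B -> f ° idm A = f.
Proof. intros [H1 H2]; subst; apply comp_id_r. Qed.

Lemma tcomp g f g2 f2 : cod f = dom g -> cod f2 = dom g2 ->
  (g ⊗ g2) ° (f ⊗ f2) = (g ° f) ⊗ (g2 ° f2).
Proof. intros; symmetry; apply tensm_comp; auto. Qed.

Lemma xl f g A B A2 B2 : hom f A B -> hom g A2 B2 -> f ⊗ g = (f ⊗ idm B2) ° (idm A ⊗ g).
Proof. intros [H1 H2] [H3 H4]. subst. rewrite tcomp; [|rewrite cod_id; auto|rewrite dom_id; auto].
 rewrite comp_id_r, comp_id_l. auto. Qed.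
Lemma xr f g A B A2 B2 : hom f A B -> hom g A2 B2 -> f ⊗ g = (idm B ⊗ g) ° (f ⊗ idm A2).
Proof. intros [H1 H2] [H3 H4]. subst. rewrite tcomp; [|rewrite dom_id; auto|rewrite cod_id; auto].
 rewrite comp_id_r, comp_id_l. auto. Qed.

Lemma P2 q a b r : a ° b = r -> cod b = dom a -> cod a = dom q -> q ° a ° b = q ° r.
Proof. intros E H1 H2. rewrite <- asc; congruence. Qed.
Lemma P3 q a b c r : a ° b ° c = r -> cod c = dom b -> cod b = dom a -> cod a = dom q ->
  q ° a ° b ° c = q ° r.
Proof. intros E H1 H2 H3. rewrite <- E. rewrite <- (asc q a b); auto.
  rewrite <- (asc q (a°b) c); auto. rewrite dom_comp; auto. rewrite cod_comp; auto. Qed.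
Ltac dc := first [ assumption | rewrite dom_comp; [dc | dc] | rewrite cod_comp; [dc|dc] ].
Lemma P4 q a b c d r : a ° b ° c ° d = r -> cod d = dom c -> cod c = dom b -> cod b = dom a ->
  cod a = dom q -> q ° a ° b ° c ° d = q ° r.
Proof. intros E H1 H2 H3 H4. rewrite (P3 q a b c (@eq_refl _ (a°b°c))); auto.
  apply P2; auto; dc. Qed.
Lemma P5 q a b c d e r : a ° b ° c ° d ° e = r -> cod e = dom d -> cod d = dom c -> cod c = dom b -> cod b = dom a ->
  cod a = dom q -> q ° a ° b ° c ° d ° e = q ° r.
Proof. intros E H1 H2 H3 H4 H5. rewrite (P4 q a b c d (@eq_refl _ (a°b°c°d))); auto.
  apply P2; auto; dc. Qed.
Lemma P6 q a b c d e f r : a ° b ° c ° d ° e ° f = r -> cod f = dom e -> cod e = dom d -> cod d = dom c -> cod c = dom b -> cod b = dom a ->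
  cod a = dom q -> q ° a ° b ° c ° d ° e ° f = q ° r.
Proof. intros E H0 H1 H2 H3 H4 H5. rewrite (P5 q a b c d e (@eq_refl _ (a°b°c°d°e))); auto.
  apply P2; auto; dc. Qed.
Lemma tcompP q g f g2 f2 : cod f = dom g -> cod f2 = dom g2 -> cod (g ⊗ g2) = dom q ->
  q ° (g ⊗ g2) ° (f ⊗ f2) = q ° ((g ° f) ⊗ (g2 ° f2)).
Proof. intros. apply P2; auto. apply tcomp; auto. rewrite cod_tensm, dom_tensm; congruence. Qed.

Lemma kr f g A W B : hom f A W -> hom g B unit -> f ° (idm A ⊗ g) = f ⊗ g.
Proof. intros Hf Hg. rewrite (xl Hf Hg). rewrite tensm_unit_r. auto. Qed.
Lemma kl f g A W B : hom f A W -> hom g B unit -> f ° (g ⊗ idm A) = g ⊗ f.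
Proof. intros Hf Hg. rewrite (xr Hg Hf). rewrite tensm_unit_l. auto. Qed.

Lemma wls A g f : cod f = dom g -> idm A ⊗ (g ° f) = (idm A ⊗ g) ° (idm A ⊗ f).
Proof. intros. rewrite tcomp; auto. pose proof (comp_id_r _ (idm A)) as E; rewrite dom_id in E; rewrite E; auto.
  rewrite cod_id, dom_id; auto. Qed.
Lemma wrs A g f : cod f = dom g -> (g ° f) ⊗ idm A = (g ⊗ idm A) ° (f ⊗ idm A).
Proof. intros. rewrite tcomp; auto. pose proof (comp_id_r _ (idm A)) as E; rewrite dom_id in E; rewrite E; auto.
  rewrite cod_id, dom_id; auto. Qed.
End Lib.

Ltac rwc E := first [ rewrite E by side | rewrite (P2 _ _ _ E) by side | rewrite (P3 _ _ _ _ E) by side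
  | rewrite (P4 _ _ _ _ _ E) by side | rewrite (P5 _ _ _ _ _ _ E) by side | rewrite (P6 _ _ _ _ _ _ _ E) by side ].
Ltac lassoc := repeat rewrite asc by side.

Ltac tc := first [rewrite tcomp by side | rewrite tcompP by side].
Ltac ids := repeat (first [erewrite idr by side | erewrite idl by side]).
Ltac tcat F := first [rewrite (tcomp _ F) by side | rewrite (tcompP _ _ F) by side].
Ltac tcatg G := first [rewrite (tcomp G) by side | rewrite (tcompP _ G) by side].
Ltac tcat2 G F := first [rewrite (tcomp G F) by side | rewrite (tcompP _ G F) by side].
Set Implicit Arguments.

Section Main.
Context {M : StrictMonoidalCat}.
Context (C V : ob M) (dC eC chi tau ups : mor M).
Context (Hd : hom dC C (C ⊗o C)) (He : hom eC C unit)
  (coass : (dC ⊗ idm C) ° dC = (idm C ⊗ dC) ° dC)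
  (cu1 : (eC ⊗ idm C) ° dC = idm C) (cu2 : (idm C ⊗ eC) ° dC = idm C)
  (Hchi : hom chi (C ⊗o V) (V ⊗o C)) (Htau : hom tau (C ⊗o V) (V ⊗o V))
  (Hups : hom ups (C ⊗o V) unit)
  (chiC : (chi ⊗ idm C) ° (idm C ⊗ chi) ° (dC ⊗ idm V) = (idm V ⊗ dC) ° chi)
  (tauG : tau ° Gamma C V dC eC chi = tau)
  (tw : (tau ⊗ idm C) ° (idm C ⊗ chi) ° (dC ⊗ idm V)
     = (idm V ⊗ chi) ° (chi ⊗ idm V) ° (idm C ⊗ tau) ° (dC ⊗ idm V))
  (coc : (tau ⊗ idm V) ° (idm C ⊗ tau) ° (dC ⊗ idm V)
     = (idm V ⊗ tau) ° (chi ⊗ idm V) ° (idm C ⊗ tau) ° (dC ⊗ idm V))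
  (pc1 : (idm V ⊗ ups) ° (chi ⊗ idm V) ° (idm C ⊗ tau) ° (dC ⊗ idm V)
    = (eC ⊗ idm V) ° Gamma C V dC eC chi)
  (pc2 : (ups ⊗ idm V) ° (idm C ⊗ tau) ° (dC ⊗ idm V) = (eC ⊗ idm V) ° Gamma C V dC eC chi)
  (pc3 : (ups ⊗ idm C) ° (idm C ⊗ chi) ° (dC ⊗ idm V) = gamma_ups C V dC ups).

Local Notation c := (idm C).
Local Notation v := (idm V).
Local Notation X := ((v ⊗ eC) ° chi).
Local Notation S F := ((c ⊗ F) ° (dC ⊗ v)).
Local Notation T := ((chi ⊗ v) ° (c ⊗ tau) ° (dC ⊗ v)).

Lemma I1 : Gamma C V dC eC chi = S X.
Proof. unfold Gamma. rewrite tcomp by side. rewrite (idl (A:=C)) by side. reflexivity. Qed.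


Lemma CA : (dC ⊗ c ⊗ v) ° (dC ⊗ v) = (c ⊗ dC ⊗ v) ° (dC ⊗ v).
Proof. rewrite (tensm_assoc _ dC c v), (tensm_assoc _ c dC v). rewrite !tcomp by side.
  rewrite coass. reflexivity. Qed.
Lemma CAP q W : hom q (C ⊗o C ⊗o C ⊗o V) W -> q ° (dC ⊗ c ⊗ v) ° (dC ⊗ v) = q ° (c ⊗ dC ⊗ v) ° (dC ⊗ v).
Proof. intros. rewrite (P2 _ _ _ CA) by side. rewrite asc by side. auto. Qed.

Lemma CU1 F Y W : hom F (C ⊗o Y) W -> (eC ⊗ F) ° (dC ⊗ idm Y) = F.
Proof. intros HF. rewrite <- (kl HF He). rewrite <- tensm_id, tensm_assoc. rewrite <- asc by side.
  rewrite tcomp by side. rewrite cu1. ids. rewrite tensm_id. ids. reflexivity. Qed.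

Lemma DG G A Y : hom G A Y -> (dC ⊗ idm Y) ° (c ⊗ G) = dC ⊗ G.
Proof. intros HG. symmetry. apply (xl Hd HG). Qed.
Lemma DGvv G A : hom G A (V ⊗o V) -> (dC ⊗ v ⊗ v) ° (c ⊗ G) = dC ⊗ G.
Proof. intros HG. rewrite tensm_id. apply (DG HG). Qed.
Lemma DGvvP q W G A : hom G A (V ⊗o V) -> hom q (C ⊗o C ⊗o V ⊗o V) W ->
  q ° (dC ⊗ v ⊗ v) ° (c ⊗ G) = q ° (dC ⊗ G).
Proof. intros HG Hq. rewrite (P2 _ _ _ (DGvv HG)) by side. auto. Qed.

Lemma NEST F G Y W : hom G (C ⊗o V) Y -> hom F (C ⊗o Y) W ->
  (c ⊗ F) ° (dC ⊗ G) ° (dC ⊗ v) = (c ⊗ (F ° (c ⊗ G) ° (dC ⊗ v))) ° (dC ⊗ v).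
Proof. intros HG HF. rewrite (xr Hd HG). rewrite <- ?tensm_id. rewrite <- tensm_assoc. lassoc.
  erewrite CAP by side. rewrite tcomp by side. rewrite tcomp by side. ids.
  reflexivity. Qed.
Lemma NESTP q W2 F G Y W : hom G (C ⊗o V) Y -> hom F (C ⊗o Y) W -> hom q (C ⊗o W) W2 ->
  q ° (c ⊗ F) ° (dC ⊗ G) ° (dC ⊗ v) = q ° ((c ⊗ (F ° (c ⊗ G) ° (dC ⊗ v))) ° (dC ⊗ v)).
Proof. intros HG HF Hq. rewrite (P3 _ _ _ _ (NEST HG HF)) by side. auto. Qed.

Lemma HX : hom X (C ⊗o V) V.
Proof. homtop. Qed.

Lemma I2 : (eC ⊗ v) ° S X = X.
Proof. lassoc. rewrite tcomp by side. ids. apply (@CU1 _ _ _ HX). Qed.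

Lemma UE : ups ° (c ⊗ v ⊗ eC) = eC ° (ups ⊗ c).
Proof. rewrite (tensm_assoc _ c v eC), tensm_id, (kr Hups He), (kl He Hups). reflexivity. Qed.

Lemma I3 : ups ° S X = ups.
Proof. rewrite <- I1. unfold Gamma. lassoc. rwc UE. rwc pc3. unfold gamma_ups. lassoc.
  rewrite (kr He Hups). rewrite <- (kl Hups He). rewrite <- (tensm_id _ C V).
  rewrite <- asc by side. rewrite (@CU1 (c ⊗ v) V (C ⊗o V)) by side. rewrite tensm_id. ids. reflexivity. Qed.

Lemma pc1' : (v ⊗ ups) ° (chi ⊗ v) ° (c ⊗ tau) ° (dC ⊗ v) = X.
Proof. rewrite pc1, I1. apply I2. Qed.
Lemma pc2' : (ups ⊗ v) ° (c ⊗ tau) ° (dC ⊗ v) = X.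
Proof. rewrite pc2, I1. apply I2. Qed.
Lemma tauG' : tau ° (c ⊗ v ⊗ eC) ° (c ⊗ chi) ° (dC ⊗ v) = tau.
Proof. pose proof tauG as E. unfold Gamma in E. rewrite !asc in E by side. exact E. Qed.
Lemma pc3' : (ups ⊗ c) ° (c ⊗ chi) ° (dC ⊗ v) = S ups.
Proof. apply pc3. Qed.

Lemma VT : (v ⊗ v ⊗ eC) ° (tau ⊗ c) = tau ° (c ⊗ v ⊗ eC).
Proof. rewrite (tensm_assoc _ c v eC), (tensm_assoc _ v v eC), !tensm_id, (kr Htau He).
  symmetry. apply (xr Htau He). Qed.

Lemma K1 : (v ⊗ X) ° (chi ⊗ v) ° (c ⊗ tau) ° (dC ⊗ v) = tau.
Proof. rewrite wls by side. lassoc. rwc (eq_sym tw). lassoc. rwc VT. lassoc. apply tauG'. Qed.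

Lemma K2 : (X ⊗ c) ° (c ⊗ chi) ° (dC ⊗ v) = chi.
Proof. rewrite wrs by side. lassoc. rwc chiC. lassoc. rewrite <- tensm_assoc. rewrite tcomp by side.
  rewrite cu1. ids. rewrite tensm_id. ids. reflexivity. Qed.

Lemma HT : hom T (C ⊗o V) (V ⊗o C ⊗o V).
Proof. homtop. Qed.

Lemma D1 : delta_CV C V dC chi tau = S T.
Proof. unfold delta_CV. lassoc. erewrite NEST by side. reflexivity. Qed.

Lemma SWX : (v ⊗ c ⊗ X) ° (chi ⊗ c ⊗ v) = (chi ⊗ v) ° (c ⊗ v ⊗ X).
Proof. transitivity (chi ⊗ X).
  - rewrite (xr Hchi HX). rewrite <- ?tensm_id. rewrite <- ?tensm_assoc. reflexivity.
  - rewrite (xl Hchi HX). rewrite <- ?tensm_id. rewrite <- ?tensm_assoc. reflexivity. Qed.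

Lemma L2a' : (v ⊗ S X) ° T = T.
Proof. rewrite wls by side. lassoc. rewrite (tensm_assoc _ v dC v). tcat chi. ids. rewrite <- chiC.
  rewrite !wrs by side. rewrite <- ?tensm_assoc. lassoc. rwc SWX. tcat2 (idm C) (idm C). ids.
  erewrite DGvvP by side. erewrite NESTP by side. rewrite K1. lassoc. reflexivity. Qed.

Lemma L2a : (c ⊗ v ⊗ Gamma C V dC eC chi) ° delta_CV C V dC chi tau = delta_CV C V dC chi tau.
Proof. rewrite D1, I1. lassoc. tcat2 (idm C) (idm C). ids. rewrite L2a'. reflexivity. Qed.

Lemma CT : (c ⊗ c ⊗ tau) ° (dC ⊗ c ⊗ v) = (dC ⊗ v ⊗ v) ° (c ⊗ tau).
Proof. rewrite (DGvv Htau). rewrite (xr Hd Htau). rewrite <- ?tensm_id. rewrite <- ?tensm_assoc. reflexivity. Qed.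

Lemma L2b' : (X ⊗ c ⊗ v) ° (c ⊗ T) ° (dC ⊗ v) = T.
Proof. rewrite !wls by side. lassoc. rwc (eq_sym CA). lassoc. rwc CT. lassoc.
  rewrite (tensm_assoc _ X c v), (tensm_assoc _ c chi v), (tensm_assoc _ dC v v).
  tcat2 (X ⊗ c) (c ⊗ chi). tcat2 (X ⊗ c ° c ⊗ chi) (dC ⊗ v). rewrite K2. ids. reflexivity. Qed.

Lemma DGvcv G A : hom G A (V ⊗o C ⊗o V) -> (dC ⊗ v ⊗ c ⊗ v) ° (c ⊗ G) = dC ⊗ G.
Proof. intros HG. rewrite !tensm_id. apply (DG HG). Qed.
Lemma DGvcvP q W G A : hom G A (V ⊗o C ⊗o V) -> hom q (C ⊗o C ⊗o V ⊗o C ⊗o V) W ->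
  q ° (dC ⊗ v ⊗ c ⊗ v) ° (c ⊗ G) = q ° (dC ⊗ G).
Proof. intros HG Hq. rewrite (P2 _ _ _ (DGvcv HG)) by side. auto. Qed.

Lemma L2b : (Gamma C V dC eC chi ⊗ c ⊗ v) ° delta_CV C V dC chi tau = delta_CV C V dC chi tau.
Proof. rewrite D1, I1. rewrite (tensm_id _ C V). rewrite wrs by side. rewrite <- (tensm_id _ C V).
  rewrite <- ?tensm_assoc. lassoc. erewrite DGvcvP by side. erewrite NEST by side.
  rewrite L2b'. reflexivity. Qed.

Lemma HGam : hom (Gamma C V dC eC chi) (C ⊗o V) (C ⊗o V).
Proof. rewrite I1. homtop. Qed.

Lemma Hdel : hom (delta_CV C V dC chi tau) (C ⊗o V) (C ⊗o V ⊗o C ⊗o V).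
Proof. rewrite D1. homtop. Qed.

Lemma L2 : (Gamma C V dC eC chi ⊗ Gamma C V dC eC chi) ° delta_CV C V dC chi tau = delta_CV C V dC chi tau.
Proof. rewrite (xl HGam HGam). rewrite <- (tensm_id _ C V). rewrite <- ?tensm_assoc.
  pose proof HGam. pose proof Hdel. rewrite <- asc by side. rewrite L2a, L2b. reflexivity. Qed.

Lemma TL : (c ⊗ ups ⊗ v) ° (dC ⊗ v ⊗ v) ° (c ⊗ tau) ° (dC ⊗ v) = S X.
Proof. erewrite DGvvP by side. erewrite NEST by side. rewrite pc2'. reflexivity. Qed.

Lemma U1' : (ups ⊗ c ⊗ v) ° (c ⊗ chi ⊗ v) ° (c ⊗ c ⊗ tau) ° (c ⊗ dC ⊗ v) ° (dC ⊗ v) = S X.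
Proof. rwc (eq_sym CA). lassoc. rwc CT. lassoc.
  rewrite (tensm_assoc _ ups c v), (tensm_assoc _ c chi v), (tensm_assoc _ dC v v).
  tcat2 (ups ⊗ c) (c ⊗ chi). tcat2 (ups ⊗ c ° c ⊗ chi) (dC ⊗ v). rewrite pc3'. ids.
  rewrite wrs by side. rewrite <- ?tensm_assoc. lassoc. apply TL. Qed.

Lemma UT : (ups ⊗ v ⊗ v) ° (c ⊗ v ⊗ tau) = tau ° (ups ⊗ c ⊗ v).
Proof. transitivity (ups ⊗ tau).
  - rewrite (xl Hups Htau). rewrite <- ?tensm_id. rewrite <- ?tensm_assoc. reflexivity.
  - rewrite (xr Hups Htau). rewrite tensm_unit_l. rewrite <- ?tensm_id. rewrite <- ?tensm_assoc.
    reflexivity. Qed.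

Lemma L4core : (X ⊗ v) ° (c ⊗ tau) ° (dC ⊗ v) = tau.
Proof. rewrite <- pc2'. rewrite !wrs by side. rewrite <- ?tensm_assoc. lassoc.
  erewrite DGvvP by side. erewrite NESTP by side. rewrite coc. rewrite !wls by side. lassoc.
  rwc UT. lassoc. rwc U1'. rewrite <- I1. apply tauG. Qed.

Lemma EG G A : hom G A (V ⊗o C ⊗o V) -> (eC ⊗ v ⊗ c ⊗ v) ° (c ⊗ G) = eC ⊗ G.
Proof. intros HG. rewrite !tensm_id. symmetry. apply (xl He HG). Qed.

Lemma EDT W f : hom f (V ⊗o C ⊗o V) W -> (eC ⊗ f) ° delta_CV C V dC chi tau = f ° T.
Proof. intros Hf. rewrite D1. rewrite <- (kl Hf He). rewrite <- ?tensm_id. lassoc.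
  rwc (EG HT). rewrite <- (asc f) by side. rewrite (@CU1 T V (V ⊗o C ⊗o V) HT). lassoc. reflexivity. Qed.

Lemma L4 : (eC ⊗ v ⊗ eC ⊗ v) ° delta_CV C V dC chi tau = tau.
Proof. rewrite (EDT (W := V ⊗o V)) by side. lassoc. rewrite (tensm_assoc _ v eC v). tcat chi. ids.
  apply L4core. Qed.

Lemma L1 : (S ups ⊗ eC ⊗ v) ° delta_CV C V dC chi tau = Gamma C V dC eC chi.
Proof. rewrite (xl (f := S ups) (g := eC ⊗ v) (A := C ⊗o V) (B := C) (A2 := C ⊗o V) (B2 := V))
    by side. rewrite D1. rewrite <- ?tensm_id, <- ?tensm_assoc. lassoc.
  tcat2 (idm C) (idm C). ids. lassoc. rewrite (tensm_assoc _ v eC v). tcat chi. ids. rewrite L4core.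
  rewrite wrs by side. rewrite <- ?tensm_assoc. lassoc. rewrite TL. symmetry; apply I1. Qed.

Lemma SWU : (v ⊗ c ⊗ ups) ° (chi ⊗ c ⊗ v) = chi ° (c ⊗ v ⊗ ups).
Proof. transitivity (chi ⊗ ups).
  - rewrite (xr Hchi Hups). rewrite <- ?tensm_id. rewrite <- ?tensm_assoc. reflexivity.
  - rewrite (tensm_assoc _ c v ups), tensm_id. rewrite (kr Hchi Hups). reflexivity. Qed.

Lemma L3 : (eC ⊗ v ⊗ S ups) ° delta_CV C V dC chi tau = chi ° Gamma C V dC eC chi.
Proof. rewrite (EDT (W := V ⊗o C)) by side. rewrite wls by side. lassoc.
  rewrite (tensm_assoc _ v dC v). tcat chi. ids. rewrite <- chiC.
  rewrite !wrs by side. rewrite <- ?tensm_assoc. lassoc. rwc SWU. lassoc. tcat2 (idm C) (idm C). ids.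
  erewrite DGvvP by side. erewrite NESTP by side. rewrite pc1'. rewrite I1. reflexivity. Qed.


Context (D : ob M) (dD eD pC pV : mor M) (HdD : hom dD D (D ⊗o D)) (HeD : hom eD D unit)
  (coassD : (dD ⊗ idm D) ° dD = (idm D ⊗ dD) ° dD)
  (cuD1 : (eD ⊗ idm D) ° dD = idm D) (cuD2 : (idm D ⊗ eD) ° dD = idm D)
  (HpC : hom pC D C) (pCd : (pC ⊗ pC) ° dD = dC ° pC) (pCe : eC ° pC = eD) (HpV : hom pV D V).

Lemma DA a b k A1 B1 K : hom a D A1 -> hom b D B1 -> hom k D K ->
  (a ⊗ ((b ⊗ k) ° dD)) ° dD = (((a ⊗ b) ° dD) ⊗ k) ° dD.
Proof. intros Ha Hb Hk.
  replace (a ⊗ ((b ⊗ k) ° dD)) with ((a ⊗ b ⊗ k) ° (idm D ⊗ dD)).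
  2:{ rewrite tcomp by side. ids. reflexivity. }
  replace (((a ⊗ b) ° dD) ⊗ k) with (((a ⊗ b) ⊗ k) ° (dD ⊗ idm D)).
  2:{ rewrite tcomp by side. ids. reflexivity. }
  rewrite <- !asc by side. rewrite coassD. rewrite tensm_assoc. reflexivity. Qed.

Lemma SD F W : hom F (C ⊗o V) W ->
  (c ⊗ F) ° (dC ⊗ v) ° (pC ⊗ pV) ° dD = (pC ⊗ (F ° (pC ⊗ pV) ° dD)) ° dD.
Proof. intros HF. tcat pC. ids. rewrite <- pCd.
  replace (((pC ⊗ pC) ° dD) ⊗ pV) with (((pC ⊗ pC) ⊗ pV) ° (dD ⊗ idm D)).
  2:{ rewrite tcomp by side. ids. reflexivity. }
  lassoc. rewrite <- (asc _ (dD ⊗ idm D)) by side. rewrite coassD. lassoc.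
  rewrite <- tensm_assoc. tcat pC. ids. tcat (idm D). ids. reflexivity. Qed.

Section H0.
Context (A1 : ups ° (pC ⊗ pV) ° dD = eD)
  (A2 : chi ° (pC ⊗ pV) ° dD = (pV ⊗ pC) ° dD)
  (A3 : tau ° (pC ⊗ pV) ° dD = (pV ⊗ pV) ° dD).

Lemma E1 : S X ° (pC ⊗ pV) ° dD = (pC ⊗ pV) ° dD.
Proof. rewrite (SD HX). rwc A2. lassoc. tcat pV. ids. rewrite pCe. rewrite <- (kr HpV HeD). lassoc.
  rwc cuD2. ids. reflexivity. Qed.

Lemma E3 : S ups ° (pC ⊗ pV) ° dD = pC.
Proof. rewrite (SD Hups). rewrite A1. rewrite <- (kr HpC HeD). lassoc. rwc cuD2. ids. reflexivity. Qed.

Lemma E4 : (eC ⊗ v) ° (pC ⊗ pV) ° dD = pV.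
Proof. tcat pC. ids. rewrite pCe. rewrite <- (kl HpV HeD). lassoc. rwc cuD1. ids. reflexivity. Qed.

Lemma E5 : delta_CV C V dC chi tau ° ((pC ⊗ pV) ° dD) = (((pC ⊗ pV) ° dD) ⊗ ((pC ⊗ pV) ° dD)) ° dD.
Proof. rewrite D1. lassoc. rewrite (SD HT). lassoc. rwc (SD Htau). rewrite A3.
  rewrite (DA HpC HpV HpV). lassoc. tcat2 chi ((pC ⊗ pV) ° dD). ids. lassoc. rewrite A2.
  rewrite <- (DA HpV HpC HpV). erewrite (DA HpC HpV) by side. reflexivity. Qed.
End H0.

Section Fin.
Context (CV : ob M) (i p : mor M) (Hi : hom i CV (C ⊗o V)) (Hp : hom p (C ⊗o V) CV)
  (Eip : i ° p = Gamma C V dC eC chi) (Epi : p ° i = idm CV).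

Lemma Gi : Gamma C V dC eC chi ° i = i.
Proof. rewrite <- Eip. rewrite <- asc by side. rewrite Epi. ids. reflexivity. Qed.

Lemma facts_w w : is_coalgebra_morphism D CV dD eD
        ((p ⊗ p) ° delta_CV C V dC chi tau ° i) (ups ° i) w ->
  delta_CV C V dC chi tau ° (i ° w) = ((i ° w) ⊗ (i ° w)) ° dD /\ Gamma C V dC eC chi ° (i ° w) = i ° w.
Proof. intros [Hw [Hcm Hcu]]. pose proof Hdel. pose proof HGam. split.
  - pose proof (f_equal (fun z => (i ⊗ i) ° z) Hcm) as E. cbv beta in E.
    rewrite !asc in E by side. rewrite !tcomp in E by side. rewrite Eip in E. rewrite L2 in E.
    rewrite E. lassoc. reflexivity.
  - rewrite asc by side. rewrite Gi. reflexivity. Qed.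

Lemma key w : is_coalgebra_morphism D CV dD eD
        ((p ⊗ p) ° delta_CV C V dC chi tau ° i) (ups ° i) w ->
      gamma_ups C V dC ups ° i ° w = pC ->
      (eC ⊗ idm V) ° i ° w = pV -> i ° w = (pC ⊗ pV) ° dD.
Proof. intros Hw H1 H2. destruct (facts_w Hw) as [F1 F2]. destruct Hw as [Hw _].
  pose proof Hdel. pose proof HGam.
  rewrite <- F2. rewrite <- L1. rewrite <- asc by side. rewrite F1. lassoc.
  rewrite tcomp by side. unfold gamma_ups in H1. rewrite !asc by side. rewrite H1, H2. reflexivity. Qed.

Lemma main_sec :
  (exists! w : mor M,
      is_coalgebra_morphism D CV dD eD
        ((p ⊗ p) ° delta_CV C V dC chi tau ° i) (ups ° i) w /\ gamma_ups C V dC ups ° i ° w = pC /\ (eC ⊗ idm V) ° i ° w = pV)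
  <->
  (ups ° (pC ⊗ pV) ° dD = eD /\ chi ° (pC ⊗ pV) ° dD = (pV ⊗ pC) ° dD /\ tau ° (pC ⊗ pV) ° dD = (pV ⊗ pV) ° dD).
Proof. pose proof Hdel. pose proof HGam. split.
  - intros [w [[Hw [H1 H2]] _]]. pose proof (key Hw H1 H2) as K.
    destruct (facts_w Hw) as [F1 F2]. destruct Hw as [Hw [Hcm Hcu]].
    rewrite K in F1, F2. split; [|split].
    + rewrite <- asc by side. rewrite <- K. rewrite asc by side. exact Hcu.
    + rewrite <- asc by side. rewrite <- F2. rewrite asc by side.
      rewrite <- L3. rewrite <- asc by side. rewrite F1. lassoc. rewrite tensm_assoc.
      rewrite tcomp by side. rewrite <- K. rewrite !asc by side. unfold gamma_ups in H1.
      rewrite H1, H2. reflexivity.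
    + rewrite <- asc by side. rewrite <- L4. rewrite <- asc by side. rewrite F1. lassoc.
      rewrite tensm_assoc. rewrite tcomp by side. rewrite <- K. rewrite !asc by side.
      rewrite H2. reflexivity.
  - intros [A1 [A2 A3]]. exists (p ° ((pC ⊗ pV) ° dD)).
    assert (G0 : i ° (p ° ((pC ⊗ pV) ° dD)) = (pC ⊗ pV) ° dD).
    { rewrite asc by side. rewrite Eip, I1. lassoc. apply (E1 A2). }
    split; [split; [split; [|split] | split] |].
    + homtop.
    + rewrite <- !asc by side. rewrite G0. rewrite (E5 A2 A3). lassoc. rewrite tcomp by side. lassoc. reflexivity.
    + rewrite <- asc by side. rewrite G0. lassoc. exact A1.
    + unfold gamma_ups. rewrite <- asc by side. rewrite G0. lassoc. apply (E3 A1).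
    + rewrite <- asc by side. rewrite G0. lassoc. apply E4.
    + intros w' [Hw' [H1 H2]]. pose proof (key Hw' H1 H2) as K. destruct Hw' as [Hw' _].
      rewrite <- K. rewrite asc by side. rewrite Epi. ids. reflexivity. Qed.
End Fin.

End Main.

Theorem theorem1p16 (M : StrictMonoidalCat) (Hsplit : idempotents_split M)
  (C V D CV : ob M) (dC eC chi tau ups dD eD pC pV i p : mor M)
  (Hwcc : weak_crossed_coproduct C V dC eC chi tau)
  (Hups : precounit C V dC eC chi tau ups)
  (Hsp : splits_as (Gamma C V dC eC chi) (C ⊗o V) CV i p)
  (HD : is_coalgebra D dD eD)
  (HpC : is_coalgebra_morphism D C dD eD dC eC pC)
  (HpV : hom pV D V) :
  (exists! w : mor M,
      is_coalgebra_morphism D CV dD eD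
        ((p ⊗ p) ° delta_CV C V dC chi tau ° i) (ups ° i) w /\
      gamma_ups C V dC ups ° i ° w = pC /\
      (eC ⊗ idm V) ° i ° w = pV)
  <->
  (ups ° (pC ⊗ pV) ° dD = eD /\
   chi ° (pC ⊗ pV) ° dD = (pV ⊗ pC) ° dD /\
   tau ° (pC ⊗ pV) ° dD = (pV ⊗ pV) ° dD).
Proof.
  destruct Hwcc as [[Hd [He [coass [cu1 cu2]]]] [Hchi [Htau [chiC [tauG [tw coc]]]]]].
  destruct Hups as [Hu [pc1 [pc2 pc3]]].
  destruct Hsp as [Hi [Hp [Eip Epi]]].
  destruct HD as [HdD [HeD [coassD [cuD1 cuD2]]]].
  destruct HpC as [HpC' [pCd pCe]].
  unfold chi_condition, twisted_condition, cocycle_condition in *.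
  eapply main_sec; eassumption.
Qed.
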